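(* Let $G$ be a connected graph on $X$. For every $k\ge1$ and every set $A\subseteq X$ with finite edge-boundary $\delta A$, the set $N_k(A)$ is finite.
   Context: A graph on $X$ is an irreflexive symmetric relation $G\subseteq X^2$. For $A\subseteq X$, $\delta A$ is the set of edges with one endpoint in $A$ and the other in $A^c:=X\setminus A$. A cut is a set $A$ with $A$, $A^c$ infinite and $\delta A$ finite; a cut is neat if the induced subgraphs on $A$ and $A^c$ are connected; $\mathcal C_k$ is the set of neat cuts $A$ with $|\delta A|=k$. Sets $A,B$ are nested if one of $A\cap B$, $A\cap B^c$, $A^c\cap B$, $A^c\cap B^c$ is empty. $N_k(A)$ is the set of cuts in $\mathcal C_k$ that are not nested with $A$. *)

(* Defs.v *)
From Stdlib Require Import List Relations.
Import ListNotations.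

Definition is_graph {X : Type} (G : X -> X -> Prop) : Prop :=
  (forall x, ~ G x x) /\ (forall x y, G x y -> G y x).

Definition finite_set {T : Type} (P : T -> Prop) : Prop :=
  exists l : list T, forall x, P x -> In x l.

Definition infinite_set {T : Type} (P : T -> Prop) : Prop := ~ finite_set P.

Definition has_card {T : Type} (P : T -> Prop) (n : nat) : Prop :=
  exists l : list T, NoDup l /\ length l = n /\ (forall x, P x <-> In x l).

Definition compl {X : Type} (A : X -> Prop) : X -> Prop := fun x => ~ A x.

(* Edge boundary delta A: each edge {x,y} with x in A, y in A^c is
   represented exactly once, by the ordered pair (x, y). *)
Definition boundary {X : Type} (G : X -> X -> Prop) (A : X -> Prop)
  : X * X -> Prop :=
  fun e => G (fst e) (snd e) /\ A (fst e) /\ ~ A (snd e).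

Definition connected {X : Type} (G : X -> X -> Prop) : Prop :=
  forall x y, clos_refl_trans X G x y.

Definition induced_connected {X : Type} (G : X -> X -> Prop) (A : X -> Prop)
  : Prop :=
  forall x y, A x -> A y ->
    clos_refl_trans X (fun u v => G u v /\ A u /\ A v) x y.

Definition is_cut {X : Type} (G : X -> X -> Prop) (A : X -> Prop) : Prop :=
  infinite_set A /\ infinite_set (compl A) /\ finite_set (boundary G A).

Definition neat_cut {X : Type} (G : X -> X -> Prop) (A : X -> Prop) : Prop :=
  is_cut G A /\ induced_connected G A /\ induced_connected G (compl A).

Definition C_k {X : Type} (G : X -> X -> Prop) (k : nat) (A : X -> Prop)
  : Prop :=
  neat_cut G A /\ has_card (boundary G A) k.

Definition empty_set {X : Type} (P : X -> Prop) : Prop := forall x, ~ P x.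

Definition nested {X : Type} (A B : X -> Prop) : Prop :=
  empty_set (fun x => A x /\ B x) \/
  empty_set (fun x => A x /\ ~ B x) \/
  empty_set (fun x => ~ A x /\ B x) \/
  empty_set (fun x => ~ A x /\ ~ B x).

Definition N_k {X : Type} (G : X -> X -> Prop) (k : nat) (A : X -> Prop)
  : (X -> Prop) -> Prop :=
  fun B => C_k G k B /\ ~ nested A B.

(* A family of subsets of X is finite if finitely many sets cover it,
   up to extensional equality of sets. *)
Definition finite_family {X : Type} (F : (X -> Prop) -> Prop) : Prop :=
  exists L : list (X -> Prop),
    forall B, F B -> exists B', In B' L /\ (forall x, B x <-> B' x).

(* Main.v *)
Require Import Defs.
From Stdlib Require Import List Relations Classical Lia.
Import ListNotations.

Lemma cross {X : Type} (R : X -> X -> Prop) a b :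
  clos_refl_trans X R a b ->
  exists l : list (X * X), (forall e, In e l -> R (fst e) (snd e)) /\
    (forall P : X -> Prop, P a -> ~ P b ->
       exists e, In e l /\ P (fst e) /\ ~ P (snd e)).
Proof.
  induction 1 as [x y Hxy | x | x y z H1 IH1 H2 IH2].
  - exists [(x, y)]. split.
    + intros e [<-|[]]; auto.
    + intros P Px Py. exists (x, y); simpl; auto.
  - exists []. split. intros e []. intros P Px Py; contradiction.
  - destruct IH1 as [l1 [Ha Ha']]; destruct IH2 as [l2 [Hb Hb']].
    exists (l1 ++ l2). split.
    + intros e He; apply in_app_or in He; destruct He; auto.
    + intros P Px Pz. destruct (classic (P y)) as [Py|Py].
      * destruct (Hb' P Py Pz) as [e [? ?]]. exists e; split; [apply in_or_app; auto|tauto].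
      * destruct (Ha' P Px Py) as [e [? ?]]. exists e; split; [apply in_or_app; auto|tauto].
Qed.

Lemma crt_mono {X : Type} (R S : X -> X -> Prop) :
  (forall a b, R a b -> S a b) -> forall a b, clos_refl_trans X R a b -> clos_refl_trans X S a b.
Proof.
  intros HRS a b H; induction H.
  - apply rt_step; auto.
  - apply rt_refl.
  - eapply rt_trans; eauto.
Qed.

Lemma remove_one {T : Type} (l : list T) a : In a l ->
  exists l', length l' = pred (length l) /\ forall e, In e l -> e = a \/ In e l'.
Proof.
  induction l as [|b t IH]; simpl; [tauto|].
  intros [->|H].
  - exists t; split; auto. intros e [->|?]; auto.
  - destruct (IH H) as [l' [Hlen Hin]]. exists (b :: l'). split.
    + destruct t; [destruct H|]. simpl in *. lia.
    + intros e [<-|He]. right; left; auto. destruct (Hin e He); auto. right; right; auto.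
Qed.

Lemma union_fin {X I : Type} (es : list I) (H : I -> (X -> Prop) -> Prop) :
  (forall e, In e es -> finite_family (H e)) ->
  finite_family (fun B => exists e, In e es /\ H e B).
Proof.
  induction es as [|e es IH]; intros Hf.
  - exists []. intros B [e [[] _]].
  - destruct (Hf e (or_introl eq_refl)) as [L1 H1].
    destruct IH as [L2 H2]. intros e' He'; apply Hf; right; auto.
    exists (L1 ++ L2). intros B [e' [[<-|He'] HB]].
    + destruct (H1 B HB) as [B' [? ?]]; exists B'; split; auto; apply in_or_app; auto.
    + destruct (H2 B (ex_intro _ e' (conj He' HB))) as [B' [? ?]].
      exists B'; split; auto; apply in_or_app; auto.
Qed.

Lemma fin_mono {X : Type} (F F2 : (X -> Prop) -> Prop) :
  finite_family F2 -> (forall B, F B -> F2 B) -> finite_family F.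
Proof.
  intros [L HL] H. exists L. intros B HB. apply HL, H, HB.
Qed.

Definition KF {X : Type} (G : X -> X -> Prop) (k : nat) (u v : X) (B : X -> Prop) : Prop :=
  B u /\ ~ B v /\ induced_connected G B /\ induced_connected G (compl B) /\
  exists l : list (X * X), length l <= k /\ forall e, boundary G B e -> In e l.

Lemma key : forall k (X : Type) (G : X -> X -> Prop) u v, G u v -> finite_family (KF G k u v).
Proof.
  induction k as [|k IHk]; intros X G u v Guv.
  - exists []. intros B [Bu [Bv [_ [_ [l [Hl Hc]]]]]].
    assert (In (u, v) l) by (apply Hc; unfold boundary; simpl; auto).
    destruct l; simpl in *; [contradiction|lia].
  - set (G' := fun a b => G a b /\ ~ ((a = u /\ b = v) \/ (a = v /\ b = u))).
    set (R := fun x => clos_refl_trans X G' u x).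
    assert (Fp : forall B, KF G (S k) u v B ->
               ~ (exists e, boundary G B e /\ e <> (u, v)) -> forall x, B x <-> R x).
    { intros B [Bu [Bv [IC1 [IC2 _]]]] Hno x. split.
      - intros Bx. unfold R. apply crt_mono with (2 := IC1 u x Bu Bx).
        intros a b [Gab [Ba Bb]]. split; auto.
        intros [[-> ->]|[-> ->]]; contradiction.
      - intros Rx. assert (Hgen : forall a b, clos_refl_trans X G' a b -> B a -> B b).
        { intros a b Hab; induction Hab as [a b Hab | a | a b c _ IH1 _ IH2]; auto.
          intros Ba. apply NNPP; intros Bb. apply Hno. exists (a, b). split.
          - unfold boundary; simpl. destruct Hab; auto.
          - intros Heq; injection Heq; intros -> ->. destruct Hab as [_ Hn]. apply Hn; auto. }
        apply (Hgen u x Rx Bu). }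
    destruct (classic (exists B0, KF G (S k) u v B0 /\ exists e, boundary G B0 e /\ e <> (u, v)))
      as [[B0 [HB0 [f [Hf Hfne]]]] | Hno].
    + assert (Huv : clos_refl_trans X G' u v).
      { destruct f as [a b]. destruct Hf as [Gab [Ba Bb]]. simpl in *.
        destruct HB0 as [Bu [Bv [IC1 [IC2 _]]]].
        apply rt_trans with a.
        { apply crt_mono with (2 := IC1 u a Bu Ba). intros x y [Gxy [Bx By]]. split; auto.
          intros [[-> ->]|[-> ->]]; contradiction. }
        apply rt_trans with b.
        { apply rt_step. split; auto. intros [[-> ->]|[-> ->]]. apply Hfne; reflexivity. contradiction. }
        apply crt_mono with (2 := IC2 b v Bb Bv). intros x y [Gxy [Bx By]]. split; auto.
        intros [[-> ->]|[-> ->]]; unfold compl in *; contradiction. }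
      destruct (cross _ _ _ Huv) as [W [HW HWc]].
      destruct (union_fin W (fun e => KF G' k (fst e) (snd e))) as [L HL].
      { intros e He. apply IHk. destruct (HW e He); auto. }
      exists (R :: L). intros B HB.
      destruct (classic (exists e, boundary G B e /\ e <> (u, v))) as [Hy|Hn].
      * destruct HB as [Bu [Bv [IC1 [IC2 [l [Hl Hc]]]]]].
        destruct (HWc B Bu Bv) as [e [HeW [Be Be']]].
        destruct (HL B) as [B' [HB' HBB']].
        { exists e. split; auto. split; [auto|split;[auto|split;[|split]]].
          - intros x y Bx By. apply crt_mono with (2 := IC1 x y Bx By).
            intros a b [Gab [Ba Bb]]. split; [split; auto|auto].
            intros [[-> ->]|[-> ->]]; contradiction.
          - intros x y Bx By. apply crt_mono with (2 := IC2 x y Bx By).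
            intros a b [Gab [Ba Bb]]. split; [split; auto|auto].
            intros [[-> ->]|[-> ->]]; unfold compl in *; contradiction.
          - assert (Hin : In (u, v) l) by (apply Hc; unfold boundary; simpl; auto).
            destruct (remove_one l _ Hin) as [l' [Hl' Hl'c]].
            exists l'. split; [lia|].
            intros [a b] [[Gab Hn] [Ba Bb]]; simpl in *.
            destruct (Hl'c (a, b)) as [Heq|?]; auto.
            + apply Hc. unfold boundary; simpl; auto.
            + injection Heq; intros -> ->. exfalso; apply Hn; auto. }
        exists B'; split; [right|]; auto.
      * exists R; split; [left; auto|]. apply Fp; auto.
    + exists [R]. intros B HB. exists R. split; [left; auto|]. apply Fp; auto.
      intros He. apply Hno. exists B. split; auto.
Qed.

Lemma walks {X : Type} (G : X -> X -> Prop) a0 (L : list (X * X)) :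
  (forall x, clos_refl_trans X G a0 x) ->
  exists E : list (X * X), (forall f, In f E -> G (fst f) (snd f)) /\
    forall e, In e L -> forall P : X -> Prop, P a0 -> ~ P (fst e) ->
      exists f, In f E /\ P (fst f) /\ ~ P (snd f).
Proof.
  intros Hc. induction L as [|e L IH].
  - exists []. split; intros ? [].
  - destruct IH as [E [HE1 HE2]].
    destruct (cross G a0 (fst e) (Hc _)) as [W [HW1 HW2]].
    exists (W ++ E). split.
    + intros f Hf; apply in_app_or in Hf; destruct Hf; auto.
    + intros e' [<-|He'] P Pa Pe.
      * destruct (HW2 P Pa Pe) as [f [? ?]]; exists f; split; [apply in_or_app; auto | auto].
      * destruct (HE2 e' He' P Pa Pe) as [f [? ?]]; exists f; split; [apply in_or_app; auto | auto].
Qed.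

Lemma ne_empty {X : Type} (P : X -> Prop) : ~ empty_set P -> exists x, P x.
Proof.
  intros H. apply NNPP; intros Hn. apply H. intros x Px. apply Hn; eauto.
Qed.

Theorem mainTheorem17 (X : Type) (G : X -> X -> Prop)
  (HG : is_graph G) (Hconn : connected G)
  (k : nat) (Hk : 1 <= k) (A : X -> Prop)
  (HA : finite_set (boundary G A)) :
  finite_family (N_k G k A).
Proof.
  destruct HA as [LA HLA].
  assert (Hend : forall B, N_k G k A B ->
            (exists e, In e LA /\ B (fst e)) /\ (exists e, In e LA /\ ~ B (fst e))).
  { intros B [[[_ [IC1 IC2]] _] Hnn].
    unfold nested in Hnn.
    destruct (ne_empty _ (fun H => Hnn (or_introl H))) as [p1 [Ap1 Bp1]].
    destruct (ne_empty _ (fun H => Hnn (or_intror (or_introl H)))) as [p2 [Ap2 Bp2]].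
    destruct (ne_empty _ (fun H => Hnn (or_intror (or_intror (or_introl H))))) as [p3 [Ap3 Bp3]].
    destruct (ne_empty _ (fun H => Hnn (or_intror (or_intror (or_intror H))))) as [p4 [Ap4 Bp4]].
    split.
    - destruct (cross _ _ _ (IC1 p1 p3 Bp1 Bp3)) as [W [HW HWc]].
      destruct (HWc A Ap1 Ap3) as [e [He [Ae Ae']]].
      destruct (HW e He) as [Ge [Be _]].
      exists e; split; auto. apply HLA. split; auto.
    - destruct (cross _ _ _ (IC2 p2 p4 Bp2 Bp4)) as [W [HW HWc]].
      destruct (HWc A Ap2 Ap4) as [e [He [Ae Ae']]].
      destruct (HW e He) as [Ge [Be _]].
      exists e; split; auto. apply HLA. split; auto. }
  destruct LA as [|e0 LA'].
  { exists []. intros B HB. destruct (Hend B HB) as [[e [[] _]] _]. }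
  set (a0 := fst e0).
  destruct (walks G a0 (e0 :: LA') (Hconn a0)) as [E [HE1 HE2]].
  set (E2 := E ++ map (fun f => (snd f, fst f)) E).
  apply fin_mono with (fun B => exists f, In f E2 /\ KF G k (fst f) (snd f) B).
  { apply union_fin. intros f Hf. apply key. unfold E2 in Hf.
    apply in_app_or in Hf. destruct Hf as [Hf|Hf]; auto.
    apply in_map_iff in Hf. destruct Hf as [g [<- Hg]]. simpl. apply HG. apply HE1; auto. }
  intros B HB. destruct (Hend B HB) as [[e1 [He1 Be1]] [e2 [He2 Be2]]].
  destruct HB as [[[_ [IC1 IC2]] [l [_ [Hl Hc]]]] _].
  assert (HK : forall a b, B a -> ~ B b -> KF G k a b B).
  { intros a b Ba Bb. split; [auto|split;[auto|split;[auto|split;[auto|]]]].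
    exists l. split; [lia|]. intros e He; apply Hc; auto. }
  destruct (classic (B a0)) as [Ba0|Ba0].
  - destruct (HE2 e2 He2 B Ba0 Be2) as [f [Hf [Bf Bf']]].
    exists f. split; [unfold E2; apply in_or_app; auto|]. apply HK; auto.
  - destruct (HE2 e1 He1 (compl B) Ba0 (fun H => H Be1)) as [f [Hf [Bf Bf']]].
    exists (snd f, fst f). split.
    + unfold E2; apply in_or_app; right. apply in_map_iff. exists f; auto.
    + simpl. apply HK; auto. unfold compl in Bf'. apply NNPP; auto.
Qed.
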